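(* Let $n\ge 1$ and let $T\in\mathbb{C}^n\otimes\mathbb{C}^n\otimes\mathbb{C}^n$ have slice rank strictly less than $n$. Then $T$ lies in the nullcone of the action of $G=\mathrm{SL}_n\times\mathrm{SL}_n\times\mathrm{SL}_n$; that is, every homogeneous $G$-invariant polynomial of positive degree on $\mathbb{C}^n\otimes\mathbb{C}^n\otimes\mathbb{C}^n$ vanishes at $T$. *)

(* Defs.v *)
From HB Require Import structures.
From mathcomp Require Import all_boot all_order all_algebra.
From mathcomp Require Import mpoly.
Set Implicit Arguments. Unset Strict Implicit. Unset Printing Implicit Defensive.
Import Order.TTheory GRing.Theory Num.Theory.
Local Open Scope ring_scope.

Definition tensor (C : Type) (n : nat) := 'I_n -> 'I_n -> 'I_n -> C.

Section Defs.
Variables (C : numClosedFieldType) (n : nat).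

Definition is_slice (S : tensor C n) : Prop :=
  (exists (a : 'I_n -> C) (b : 'I_n -> 'I_n -> C),
      forall i j k, S i j k = a i * b j k) \/
  (exists (a : 'I_n -> C) (b : 'I_n -> 'I_n -> C),
      forall i j k, S i j k = a j * b i k) \/
  (exists (a : 'I_n -> C) (b : 'I_n -> 'I_n -> C),
      forall i j k, S i j k = a k * b i j).

Definition slice_rank_le (T : tensor C n) (r : nat) : Prop :=
  exists S : 'I_r -> tensor C n,
    (forall s, is_slice (S s)) /\
    (forall i j k, T i j k = \sum_(s < r) S s i j k).

Definition slice_rank_lt (T : tensor C n) (m : nat) : Prop :=
  exists r, (r < m)%N /\ slice_rank_le T r.

Definition tensor_act (A B D : 'M[C]_n) (T : tensor C n) : tensor C n :=
  fun i j k => \sum_(a < n) \sum_(b < n) \sum_(c < n)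
                 A i a * B j b * D k c * T a b c.

Definition nvars := #|{: 'I_n * 'I_n * 'I_n}|.

Definition peval (p : {mpoly C[nvars]}) (T : tensor C n) : C :=
  p.@[fun m : 'I_nvars => let: (i, j, k) := enum_val m in T i j k].

Definition SL3_invariant (p : {mpoly C[nvars]}) : Prop :=
  forall A B D : 'M[C]_n, \det A = 1 -> \det B = 1 -> \det D = 1 ->
    forall T : tensor C n, peval p (tensor_act A B D T) = peval p T.

Definition in_nullcone (T : tensor C n) : Prop :=
  forall (d : nat) (p : {mpoly C[nvars]}),
    (0 < d)%N -> p \is d.-homog -> SL3_invariant p -> peval p T = 0.

End Defs.

(* Main.v *)
Require Import Defs.
From HB Require Import structures.
From mathcomp Require Import all_boot all_order all_algebra.
From mathcomp Require Import mpoly.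
From mathcomp Require Import ring.
From Stdlib Require Import ClassicalEpsilon FunctionalExtensionality.
Set Implicit Arguments. Unset Strict Implicit. Unset Printing Implicit Defensive.
Import Order.TTheory GRing.Theory Num.Theory.
Local Open Scope ring_scope.

Section H.
Variable C : numClosedFieldType.

Lemma meval_homog_scale N (p : {mpoly C[N]}) d (v : 'I_N -> C) (c : C) :
  p \is d.-homog -> p.@[fun i => c * v i] = c ^+ d * p.@[v].
Proof.
move=> hp; rewrite !mevalE mulr_sumr big_seq [RHS]big_seq.
apply: eq_bigr => m hm.
rewrite (eq_bigr (fun i => c ^+ m i * v i ^+ m i)); last by move=> i _; rewrite exprMn.
rewrite big_split /= prodrXr -mdegE (dhomog_mf hp hm).
by rewrite mulrCA.
Qed.

Lemma meval_poly N (p : {mpoly C[N]}) (h : 'I_N -> {poly C}) :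
  exists g : {poly C}, forall t, g.[t] = p.@[fun i => (h i).[t]].
Proof.
exists (\sum_(m <- msupp p) (p@_m)%:P * \prod_i h i ^+ m i) => t.
rewrite mevalE horner_sum; apply: eq_bigr => m _.
by rewrite hornerM hornerC horner_prod; congr (_ * _); apply: eq_bigr => i _; rewrite horner_exp.
Qed.

Lemma poly_const_zero (g : {poly C}) (c : C) a b : (a < b)%N ->
  (forall t : C, t != 0 -> t ^+ a * c = t ^+ b * g.[t]) -> c = 0.
Proof.
move=> ab H.
pose q := 'X^b * g - c *: 'X^a.
have q0 : q = 0.
  apply/eqP; apply/negPn/negP => qn0.
  pose rs := [seq (i.+1)%:R : C | i <- iota 0 (size q)].
  suff: (size rs < size q)%N by rewrite size_map size_iota ltnn.
  apply: (max_poly_roots qn0).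
    apply/allP => x /mapP [i _ ->]; apply/rootP.
    rewrite /q hornerD hornerN hornerZ !hornerE /=.
    rewrite -H ?pnatr_eq0 // mulrC subrr //.
  rewrite map_inj_uniq ?iota_uniq // => x y /eqP; rewrite eqr_nat eqSS => /eqP //.
have := congr1 (fun q : {poly C} => q`_a) q0.
rewrite /q coefB coefXnM ab coefZ coefXn eqxx mulr1 coef0 sub0r => /eqP.
by rewrite oppr_eq0 => /eqP.
Qed.

Lemma prod_if_lt (u : C) n k :
  \prod_(i < n) (if (i < k)%N then u else 1) = u ^+ minn k n.
Proof.
elim: n => [|n IH]; first by rewrite big_ord0 minn0.
rewrite big_ord_recr /= IH.
case: (ltnP n k) => h.
  by rewrite !(minn_idPr _) ?(ltnW h) // exprS mulrC.
by rewrite mulr1 !(minn_idPl _) // (leq_trans h).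
Qed.
Lemma proj_lemma r n (M : 'M[C]_(r, n)) : exists Q : 'M[C]_n,
  (forall u, \det (1 - Q + u *: Q) = u ^+ \rank M) /\
  (forall u s i, \sum_x (1 - Q + u *: Q) x i * M s x = u * M s i).
Proof.
set k := \rank M; set U := row_ebase M.
have kn : (k <= n)%N by apply: rank_leq_col.
have Uu : U \in unitmx by apply: row_ebase_unit.
exists (invmx U *m pid_mx k *m U); split.
  move=> u.
  have -> : 1 - invmx U *m pid_mx k *m U + u *: (invmx U *m pid_mx k *m U)
     = invmx U *m diag_mx (\row_j (if (j < k)%N then u else 1)) *m U.
    have -> : diag_mx (\row_(j < n) (if (j < k)%N then u else 1)) = 1 - pid_mx k + u *: pid_mx k :> 'M[C]_n.
      apply/matrixP => i j; rewrite !mxE.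
      case: (eqVneq i j) => [<-|ij]; first by rewrite !eqxx /=; case: (i < k)%N; rewrite ?mulr1n ?mulr0n ?mulr1 ?mulr0 ?subrr ?add0r ?subr0 ?addr0.
      have ij2 : (val i == val j) = false by apply/negbTE; rewrite val_eqE.
      by rewrite ?(negbTE ij) ij2 /= mulr0n mulr0 subrr addr0.
    by rewrite mulmxDr mulmxBr mulmx1 mulmxDl mulmxBl mulVmx // -scalemxAr -scalemxAl.  
  rewrite !det_mulmx det_inv det_diag mulrC mulrA.
  rewrite unitmxE in Uu; rewrite (mulrV Uu) mul1r.
  rewrite (eq_bigr (fun i : 'I_n => if (i < k)%N then u else 1)); last by move=> i _; rewrite mxE.
  by rewrite prod_if_lt (minn_idPl kn).
have MQ : M *m (invmx U *m pid_mx k *m U) = M.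
  rewrite -{1}(mulmx_ebase M) -[RHS](mulmx_ebase M) -/k -/U.
  by rewrite -!mulmxA mulKVmx // (mulmxA (pid_mx k)) pid_mx_id.
move=> u s i.
have E : M *m (1 - invmx U *m pid_mx k *m U + u *: (invmx U *m pid_mx k *m U)) = u *: M.
  by rewrite mulmxDr mulmxBr mulmx1 MQ subrr add0r -scalemxAr MQ.
have := congr1 (fun A : 'M[C]_(r, n) => A s i) E; rewrite !mxE => <-.
by apply: eq_bigr => x _; rewrite mulrC.
Qed.

Lemma rank_sum_le r n (F : 'I_r -> 'M[C]_(r, n)) :
  (\rank (\sum_s F s)%R <= \sum_s \rank (F s))%N.
Proof.
apply: (big_rec2 (fun (y1 : nat) (y2 : 'M[C]_(r,n)) => (\rank y2 <= y1)%N)).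
  by rewrite mxrank0.
move=> s y1 y2 _ IH; apply: leq_trans (mxrank_add _ _) _.
by rewrite leq_add2l.
Qed.


Lemma tact_scale n (c0 c1 c2 : C) (A B D : 'M[C]_n) (T : 'I_n -> 'I_n -> 'I_n -> C) i j k :
  tensor_act (c0 *: A) (c1 *: B) (c2 *: D) T i j k = c0 * c1 * c2 * tensor_act A B D T i j k.
Proof.
rewrite /tensor_act !mulr_sumr; apply: eq_bigr => x _; rewrite !mulr_sumr.
apply: eq_bigr => y _; rewrite !mulr_sumr; apply: eq_bigr => z _; rewrite !mxE; ring.
Qed.

Lemma tact_sum n r (A B D : 'M[C]_n) (f : 'I_r -> 'I_n -> 'I_n -> 'I_n -> C) i j k :
  tensor_act A B D (fun a b c => \sum_s f s a b c) i j k =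
  \sum_s tensor_act A B D (f s) i j k.
Proof.
rewrite /tensor_act.
under eq_bigr => x _ do under eq_bigr => y _ do under eq_bigr => z _ do rewrite mulr_sumr.
under eq_bigr => x _ do under eq_bigr => y _ do rewrite exchange_big.
under eq_bigr => x _ do rewrite exchange_big.
by rewrite exchange_big.
Qed.

Definition sl n (x : nat * ('I_n -> C) * ('I_n -> 'I_n -> C)) i j k : C :=
  let: (c, a, b) := x in
  if c == 0%N then a i * b j k else if c == 1%N then a j * b i k else a k * b i j.

Lemma slice_data n (S : tensor C n) : is_slice S ->
  exists x, forall i j k, S i j k = sl x i j k.
Proof.
case=> [[a [b h]]|[[a [b h]]|[a [b h]]]].
- by exists (0%N, a, b).
- by exists (1%N, a, b).
- by exists (2%N, a, b).
Qed.


Lemma peval_ext n (p : {mpoly C[nvars n]}) (X Y : tensor C n) :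
  (forall i j k, X i j k = Y i j k) -> peval p X = peval p Y.
Proof. by move=> h; apply: meval_eq => m; case: (enum_val m) => [[i j] k]; apply: h. Qed.

Lemma peval_scale n (p : {mpoly C[nvars n]}) d (X : tensor C n) c :
  p \is d.-homog -> peval p (fun i j k => c * X i j k) = c ^+ d * peval p X.
Proof.
move=> h; rewrite /peval -meval_homog_scale //.
by apply: meval_eq => m; case: (enum_val m) => [[i j] k].
Qed.

Lemma tact_ext n (A B D : 'M[C]_n) (X Y : tensor C n) i j k :
  (forall i j k, X i j k = Y i j k) -> tensor_act A B D X i j k = tensor_act A B D Y i j k.
Proof.
move=> h; rewrite /tensor_act; apply: eq_bigr => a _; apply: eq_bigr => b _.
by apply: eq_bigr => c _; rewrite h.
Qed.

Lemma tact_sl n (A B D : 'M[C]_n) x i j k u :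
  (x.1.1 == 0%N -> forall i, \sum_y A i y * x.1.2 y = u * x.1.2 i) ->
  (x.1.1 == 1%N -> forall j, \sum_y B j y * x.1.2 y = u * x.1.2 j) ->
  (x.1.1 != 0%N -> x.1.1 != 1%N -> forall k, \sum_y D k y * x.1.2 y = u * x.1.2 k) ->
  tensor_act A B D (sl x) i j k = u *
   (if x.1.1 == 0%N then x.1.2 i * \sum_y \sum_z B j y * D k z * x.2 y z
    else if x.1.1 == 1%N then x.1.2 j * \sum_y \sum_z A i y * D k z * x.2 y z
    else x.1.2 k * \sum_y \sum_z A i y * B j z * x.2 y z).
Proof.
case: x => [[c a] b] /= h0 h1 h2; rewrite /tensor_act /sl /=.
case: (boolP (c == 0%N)) => [e0|n0].
  rewrite mulrA -(h0 e0) mulr_suml; apply: eq_bigr => x _; rewrite mulr_sumr.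
  apply: eq_bigr => y _; rewrite mulr_sumr; apply: eq_bigr => z _; ring.
case: (boolP (c == 1%N)) => [e1|n1].
  rewrite mulrA -(h1 e1) mulr_suml exchange_big /=; apply: eq_bigr => y _; rewrite mulr_sumr.
  apply: eq_bigr => x _; rewrite mulr_sumr; apply: eq_bigr => z _; ring.
rewrite mulrA -(h2 n0 n1) mulr_suml.
under eq_bigr => x _ do rewrite exchange_big.
rewrite exchange_big /=; apply: eq_bigr => z _; rewrite mulr_sumr.
apply: eq_bigr => x _; rewrite mulr_sumr; apply: eq_bigr => y _; ring.
Qed.

End H.

Definition Fg (R : comNzRingType) n r (A0 A1 A2 : 'M[R]_n) (ty : 'I_r -> nat)
  (a : 'I_r -> 'I_n -> R) (b : 'I_r -> 'I_n -> 'I_n -> R) i j k : R :=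
  \sum_s (if ty s == 0%N then a s i * \sum_y \sum_z A1 j y * A2 k z * b s y z
          else if ty s == 1%N then a s j * \sum_x \sum_z A0 i x * A2 k z * b s x z
          else a s k * \sum_x \sum_y A0 i x * A1 j y * b s x y).

Lemma Fg_morph (R S : comNzRingType) (f : {rmorphism R -> S}) n r (A0 A1 A2 : 'M[R]_n) ty a b i j k :
  f (@Fg R n r A0 A1 A2 ty a b i j k) =
  Fg (map_mx f A0) (map_mx f A1) (map_mx f A2) ty (fun s x => f (a s x)) (fun s x y => f (b s x y)) i j k.
Proof.
rewrite /Fg rmorph_sum; apply: eq_bigr => s _.
case: ifP => _; [|case: ifP => _]; rewrite rmorphM rmorph_sum; congr (_ * _);
  apply: eq_bigr => x _; rewrite rmorph_sum; apply: eq_bigr => y _; rewrite !rmorphM !mxE //.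
Qed.

Unset Implicit Arguments.
Set Strict Implicit.
Theorem lemma4 (C : numClosedFieldType) (n : nat) (hn : (1 <= n)%N)
    (T : tensor C n) :
  slice_rank_lt T n -> in_nullcone T.
Proof.
move=> [r [rn [S [hS hT]]]] d p d0 hom inv.
have X s : {x | forall i j k, S s i j k = sl x i j k} :=
  constructive_indefinite_description _ (slice_data (hS s)).
pose x s := sval (X s).
pose ty s := (x s).1.1. pose av s := (x s).1.2. pose bv s := (x s).2.
have hT' i j k : T i j k = \sum_s sl (x s) i j k.
  by rewrite hT; apply: eq_bigr => s _; rewrite (svalP (X s)).
pose P0 s := ty s == 0%N. pose P1 s := ty s == 1%N.
pose P2 s := (ty s != 0%N) && (ty s != 1%N).
pose Mat (P : 'I_r -> bool) : 'M[C]_(r, n) :=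
  \sum_s (if P s then (delta_mx s 0 : 'M[C]_(r, 1)) *m \row_y av s y else 0).
have Mat_E P s y : Mat P s y = (if P s then av s y else 0).
  rewrite summxE (bigD1 s) //= big1 => [|s' ne].
    case: (P s); rewrite ?mxE ?addr0 //= big_ord1 !mxE !eqxx /= mul1r //.
  case: (P s'); rewrite ?mxE //= big_ord1 !mxE eq_sym (negbTE ne) /= mul0r //.
have Mat_rank P : (\rank (Mat P) <= \sum_s P s)%N.
  apply: leq_trans (rank_sum_le _) _; apply: leq_sum => s _.
  case: (P s); rewrite ?mxrank0 //.
  by apply: leq_trans (mxrankM_maxl _ _) _; apply: rank_leq_col.
pose Am (Q : 'M[C]_n) (u : C) : 'M[C]_n := \matrix_(i, y) ((1 - Q) y i + u * Q y i).
pose Ap (Q : 'M[C]_n) : 'M[{poly C}]_n :=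
  \matrix_(i, y) (((1 - Q) y i)%:P + 'X^n * (Q y i)%:P).
have proj P : exists Q, (forall u, \det (Am Q u) = u ^+ \rank (Mat P)) /\
   (forall u s, P s -> forall i, \sum_y Am Q u i y * av s y = u * av s i).
  have [Q [h1 h2]] := proj_lemma (Mat P); exists Q; split.
    move=> u; rewrite -h1 -det_tr; congr (\det _); apply/matrixP => i j; rewrite !mxE //.
  move=> u s Ps i; have := h2 u s i; rewrite Mat_E Ps => <-.
  by apply: eq_bigr => y _; rewrite Mat_E Ps !mxE.
have [Q0 [d0Q e0Q]] := proj P0.
have [Q1 [d1Q e1Q]] := proj P1.
have [Q2 [d2Q e2Q]] := proj P2.
set k0 := \rank (Mat P0) in d0Q; set k1 := \rank (Mat P1) in d1Q.
set k2 := \rank (Mat P2) in d2Q.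
have Rlt : (k0 + k1 + k2 < n)%N.
  apply: leq_ltn_trans rn; apply: leq_trans (leq_add (leq_add (Mat_rank P0) (Mat_rank P1)) (Mat_rank P2)) _.
  rewrite -!big_split /= (eq_bigr (fun _ => 1%N)) ?sum_nat_const ?card_ord ?muln1 //.
  by move=> s _; rewrite /P0 /P1 /P2; case: (ty s) => [|[|m]].
pose F (u : C) i j k := Fg (Am Q0 u) (Am Q1 u) (Am Q2 u) ty av bv i j k.
have key t : t != 0 ->
    peval p T = ((t^-1) ^+ (k0 + k1 + k2) * t ^+ n) ^+ d * peval p (F (t ^+ n)).
  move=> t0; set u := t ^+ n; set w := t^-1.
  have dt k (Q : 'M[C]_n) : \det (Am Q u) = u ^+ k -> \det (w ^+ k *: Am Q u) = 1.
    by move=> h; rewrite detZ h /u /w -!exprM mulnC -exprMn mulVf // expr1n.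
  rewrite -(inv (w ^+ k0 *: Am Q0 u) (w ^+ k1 *: Am Q1 u) (w ^+ k2 *: Am Q2 u)) ?dt //.
  rewrite -peval_scale //; apply: peval_ext => i j k.
  rewrite tact_scale; erewrite tact_ext; last exact: hT'.
  rewrite tact_sum /F /Fg mulr_sumr mulr_sumr.
  rewrite !exprD -!mulrA; apply: eq_bigr => s _.
  rewrite (@tact_sl C n _ _ _ (x s) i j k u).
  - by rewrite !mulrA.
  - by move=> h i'; apply: e0Q.
  - by move=> h j'; apply: e1Q.
  - by move=> h h' k'; apply: e2Q; rewrite /P2 h h'.
pose h (m : 'I_(nvars n)) : {poly C} := let: (i, j, k) := enum_val m in
  Fg (Ap Q0) (Ap Q1) (Ap Q2) ty (fun s y => (av s y)%:P) (fun s y z => (bv s y z)%:P) i j k.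
have [g hg] := meval_poly p h.
have Fpoly t : peval p (F (t ^+ n)) = g.[t].
  rewrite hg /peval; apply: meval_eq => m; rewrite /h; case: (enum_val m) => [[i j] k].
  rewrite -horner_evalE Fg_morph /F.
  have eA Q : map_mx (horner_eval t) (Ap Q) = Am Q (t ^+ n).
    by apply/matrixP => a b; rewrite !mxE horner_evalE !hornerE.
  rewrite !eA; congr Fg.
    extensionality s; extensionality y; by rewrite /= horner_evalE hornerC.
  extensionality s; extensionality y; extensionality z; by rewrite /= horner_evalE hornerC.
apply: (@poly_const_zero C g _ ((k0 + k1 + k2) * d) (n * d)).
  by rewrite ltn_pmul2r.
move=> t t0; rewrite (key t t0) Fpoly exprMn -!exprM !mulrA -exprMn mulfV // expr1n mul1r //.
Qed.
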